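(* Let $\mathcal{M}=(E,\rho)$ be a $q$-matroid and $\mathcal{Z}(\mathcal{M})$ its set of cyclic flats. Then $(\mathcal{Z}(\mathcal{M}),\le)$ is a lattice with meet and join $Z_1\wedge Z_2=\mathrm{cyc}(Z_1\cap Z_2)$ and $Z_1\vee Z_2=\mathrm{cl}(Z_1+Z_2)$. Moreover $\rho(Z_1\wedge Z_2)=\rho(Z_1\cap Z_2)-\dim\big((Z_1\cap Z_2)/(Z_1\wedge Z_2)\big)$ and $\rho(Z_1\vee Z_2)=\rho(Z_1+Z_2)$, and consequently \[ \rho(Z_1)+\rho(Z_2)\ge\rho(Z_1\vee Z_2)+\rho(Z_1\wedge Z_2)+\dim\big((Z_1\cap Z_2)/(Z_1\wedge Z_2)\big) \] for all $Z_1,Z_2\in\mathcal{Z}(\mathcal{M})$.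
   Context: Let $\mathbb{F}=\mathbb{F}_q$. A $q$-matroid is $\mathcal{M}=(E,\rho)$, $E$ a finite-dimensional $\mathbb{F}$-vector space, $\rho$ from subspaces to $\mathbb{Z}_{\ge0}$ with $0\le\rho(V)\le\dim V$, monotone and submodular. Flat: $\rho(F+\langle x\rangle)>\rho(F)$ for all $x\notin F$. Closure: $\mathrm{cl}(V)=\sum\{\langle x\rangle:\rho(V+\langle x\rangle)=\rho(V)\}$. Cyclic core: $\mathrm{cyc}(V)=\{x\in V\mid\rho(W)=\rho(V)\text{ for all }W\le V\text{ with }W+\langle x\rangle=V\}$; $V$ is cyclic if $\mathrm{cyc}(V)=V$. A cyclic flat is a subspace that is both a flat and cyclic. *)

(* Defs.v *)
From HB Require Import structures.
From mathcomp Require Import all_boot all_order all_algebra all_field.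
From mathcomp Require Import boolp.
Set Implicit Arguments. Unset Strict Implicit. Unset Printing Implicit Defensive.
Import GRing.Theory.
Local Open Scope ring_scope.

(* A q-matroid on E = vT, a finite-dimensional vector space over a finite
   field F = F_q, given by its rank function rho on subspaces. *)
Section QMatroid.
Variables (F : finFieldType) (vT : vectType F).
Implicit Types (V W X : {vspace vT}) (x : vT).

Definition qmatroid (rho : {vspace vT} -> nat) : Prop :=
  [/\ forall V, (rho V <= \dim V)%N,
      forall V W, (V <= W)%VS -> (rho V <= rho W)%N
    & forall V W, (rho (V + W)%VS + rho (V :&: W)%VS <= rho V + rho W)%N].

Variable rho : {vspace vT} -> nat.

Definition flat V : Prop :=
  forall x, x \notin V -> (rho V < rho (V + <[x]>)%VS)%N.

Definition cl V : {vspace vT} :=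
  (\sum_(x : finvect_type vT | rho (V + <[x : vT]>)%VS == rho V) <[x : vT]>)%VS.

Definition in_cyc V x : Prop :=
  x \in V /\ forall W, (W <= V)%VS -> (W + <[x]>)%VS = V -> rho W = rho V.

Definition cyc V : {vspace vT} :=
  (\sum_(x : finvect_type vT | `[< in_cyc V x >]) <[x : vT]>)%VS.

(* V is cyclic iff cyc(V) = V, i.e. every element of V lies in the cyclic core *)
Definition cyclic V : Prop := forall x, x \in V -> in_cyc V x.

Definition cyclic_flat V : Prop := flat V /\ cyclic V.

End QMatroid.

(* Main.v *)
Require Import Defs.
From HB Require Import structures.
From mathcomp Require Import all_boot all_order all_algebra all_field.
From mathcomp Require Import boolp zify.
Set Implicit Arguments. Unset Strict Implicit. Unset Printing Implicit Defensive.
Import GRing.Theory.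

Section Q.
Variables (F : finFieldType) (vT : vectType F).
Variable rho : {vspace vT} -> nat.
Hypothesis Hrho : qmatroid rho.
Implicit Types (U V W A B C T X : {vspace vT}) (x y : vT).

Lemma rle V : (rho V <= \dim V)%N. Proof. by case: Hrho. Qed.
Lemma rmono V W : (V <= W)%VS -> (rho V <= rho W)%N. Proof. by case: Hrho => _ H _; apply: H. Qed.
Lemma rsub V W : (rho (V + W)%VS + rho (V :&: W)%VS <= rho V + rho W)%N.
Proof. by case: Hrho. Qed.

Lemma modlaw A B C : (A <= C)%VS -> (C :&: (A + B) = A + (C :&: B))%VS.
Proof.
move=> hAC; apply/eqP; rewrite eqEsubv; apply/andP; split.
  apply/subvP => y /memv_capP [yC /memv_addP [a aA [b bB ey]]].
  rewrite ey; apply: memv_add => //; apply/memv_capP; split => //.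
  have aC : a \in C by move/subvP: hAC; apply.
  have -> : b = (y - a)%R by rewrite ey addrAC subrr add0r.
  exact: memvB.
rewrite subv_add !subv_cap hAC addvSl capvSl /=.
exact: addvS (sub0v _) (capvSr _ _) || by apply: subv_trans (capvSr C B) (addvSr _ _).
Qed.

Lemma L2 W V : (W <= V)%VS -> (rho V <= rho W + (\dim V - \dim W))%N.
Proof.
move=> WV.
have e : (W + (V :\: W) = V)%VS.
  by rewrite addvC addv_diff; apply/addv_idPl.
have := rsub W (V :\: W); rewrite e.
have := rle (V :\: W).
have := dimv_cap_compl V W. rewrite (capv_idPr WV). lia.
Qed.

Lemma dim_addline W x : (\dim (W + <[x]>) <= (\dim W).+1)%N.
Proof.
have := dimv_add_leqif W <[x]>. case=> + _. rewrite dim_vline.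
case: (x != 0%R) => /=; lia.
Qed.

Lemma hyp_eq W x U T : (W + <[x]> = U)%VS -> (W <= T)%VS -> (T <= U)%VS ->
  ~~ (T <= W)%VS -> T = U.
Proof.
move=> WU WT TU nTW; apply/eqP; rewrite eqEdim TU /=.
have := dim_addline W x; rewrite WU.
have := dimv_leqif_eq WT. case=> + E.
have : (W == T) = false.
  apply/negP => /eqP eWT; move: nTW; rewrite -eWT subvv //.
move=> F0; rewrite F0 in E; move/negbT: E; rewrite neq_ltn; lia.
Qed.

Lemma ltn_rho_ext V x : (rho (V + <[x]>) <= rho V)%N -> rho (V + <[x]>)%VS = rho V.
Proof. move=> h; apply/eqP; rewrite eqn_leq h; exact: rmono (addvSl _ _). Qed.

Lemma cl_sup V x : rho (V + <[x]>)%VS = rho V -> (<[x]> <= cl rho V)%VS.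
Proof.
move=> h; rewrite /cl.
apply: (sumv_sup (x : finvect_type vT)) => /=; rewrite ?h ?eqxx ?subvv //.
Qed.

Lemma cl_rank V : rho (V + cl rho V)%VS = rho V.
Proof.
rewrite /cl; elim/big_ind: _ => [|U1 U2 h1 h2|y /eqP //].
  by rewrite addv0.
apply/eqP; rewrite eqn_leq (rmono (addvSl V _)) andbT.
have := rsub (V + U1)%VS (V + U2)%VS.
have e : (V + U1 + (V + U2) = V + (U1 + U2))%VS.
  apply/eqP; rewrite eqEsubv !subv_add /=.
  repeat (apply/andP; split); rewrite ?addvSl //;
   try (apply: subv_trans (addvSr V _); rewrite ?addvSl ?addvSr //; fail).
  - exact: subv_trans (addvSl V U1) (addvSl _ _).
  - exact: subv_trans (addvSr V U1) (addvSl _ _).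
  - exact: subv_trans (addvSr V U2) (addvSr _ _).
rewrite e h1 h2.
have : (rho V <= rho ((V + U1) :&: (V + U2))%VS)%N by rewrite rmono // subv_cap !addvSl.
lia.
Qed.

Lemma subv_cl V : (V <= cl rho V)%VS.
Proof.
apply/subvP => x xV; rewrite memvE; apply: cl_sup.
by rewrite (addv_idPl _) // -memvE.
Qed.

Lemma rho_cl V : rho (cl rho V) = rho V.
Proof. by rewrite -{1}(addv_idPr (subv_cl V)) cl_rank. Qed.

Lemma cl_mem V x : x \in cl rho V -> rho (V + <[x]>)%VS = rho V.
Proof.
move=> xc; apply: ltn_rho_ext; rewrite -{1}(cl_rank V) rmono //.
by apply: addvS; rewrite ?subvv // -memvE.
Qed.

Lemma cl_flat V : flat rho (cl rho V).
Proof.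
move=> x xn; rewrite ltnNge; apply/negP => h.
move: xn; rewrite memvE cl_sup //; apply: ltn_rho_ext.
rewrite -(rho_cl V); apply: leq_trans h; rewrite rmono // addvS // subv_cl.
by [].
Qed.

Lemma flat_above Z S x : flat rho Z -> (S <= Z)%VS ->
  rho (S + <[x]>)%VS = rho S -> x \in Z.
Proof.
move=> fZ SZ h; apply/negPn/negP => xn; have := fZ x xn.
have := rsub Z (S + <[x]>)%VS.
have -> : (Z + (S + <[x]>) = Z + <[x]>)%VS.
  by rewrite addvA (addv_idPl SZ).
have : (rho S <= rho (Z :&: (S + <[x]>))%VS)%N by rewrite rmono // subv_cap SZ addvSl.
rewrite h; lia.
Qed.

Lemma cl_min Z S : flat rho Z -> (S <= Z)%VS -> (cl rho S <= Z)%VS.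
Proof.
move=> fZ SZ; apply/subvP => x /cl_mem; exact: flat_above.
Qed.

Lemma cyc_sup V x : in_cyc rho V x -> (<[x]> <= cyc rho V)%VS.
Proof.
move=> h; rewrite /cyc.
apply: (@sumv_sup _ _ (finvect_type vT) (x : finvect_type vT) _ _ (fun y => <[y : vT]>%VS)) => //=.
exact/asboolP.
Qed.

Lemma cyc_sub V : (cyc rho V <= V)%VS.
Proof. by apply/subv_sumP => x /asboolP [xV _]; rewrite -memvE. Qed.

Definition Qc V U := (U <= V)%VS /\ forall W y, (W <= V)%VS -> (W + <[y]> = V)%VS ->
   (rho W < rho V)%N -> (U <= W)%VS.

Lemma Qc_line V x : in_cyc rho V x -> Qc V <[x]>.
Proof.
move=> [xV h]; split; first by rewrite -memvE.
move=> W y WV Wy lt; rewrite -memvE; apply/negPn/negP => xW.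
have e : (W + <[x]>)%VS = V.
  apply: (hyp_eq Wy); rewrite ?addvSl // ?subv_add ?WV -?memvE //.
  by rewrite subvv.
by move: lt; rewrite (h W WV e) ltnn.
Qed.

Lemma line_Qc V x : Qc V <[x]> -> in_cyc rho V x.
Proof.
move=> [xV h]; split; first by rewrite memvE.
move=> W WV e; apply/eqP; rewrite eqn_leq rmono //= leqNgt; apply/negP => lt.
have := h W x WV e lt => xW.
by move: lt; rewrite -{1}e (addv_idPl xW) ltnn.
Qed.

Lemma cyc_in V x : x \in cyc rho V -> in_cyc rho V x.
Proof.
move=> xc; apply: line_Qc.
have : Qc V (cyc rho V).
  rewrite /cyc; elim/big_ind: _ => [|U1 U2 [h1 k1] [h2 k2]|y /asboolP /Qc_line //].
    rewrite /Qc; split => [|*]; exact: sub0v.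
  rewrite /Qc; split; first by rewrite subv_add h1 h2.
  by move=> W y WV Wy lt; rewrite subv_add (k1 W y) ?(k2 W y).
move=> [h k]; split; first by apply: subv_trans h; rewrite -memvE.
by move=> W y WV Wy lt; apply: subv_trans (k W y WV Wy lt); rewrite -memvE.
Qed.

Definition good V A := (A <= V)%VS /\ (rho A + (\dim V - \dim A) <= rho V)%N.

Lemma good_up V A : good V A -> (A <= cyc rho V)%VS -> good V (cyc rho V).
Proof.
move=> [AV h] hAC; split; first exact: cyc_sub.
have := L2 hAC; have := dimvS hAC; have := dimvS (cyc_sub V); lia.
Qed.

Lemma good_step V A : good V A -> (A <= cyc rho V)%VS \/
  exists A', good V A' /\ (\dim A' < \dim A)%N.
Proof.
move=> [AV gA]; case: (boolP (A <= cyc rho V)%VS) => [hAC|/subvPn [x xA xC]]; first by left.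
right.
have xV : x \in V by move/subvP: AV; apply.
have [W [WV [e lt]]] : exists W, (W <= V)%VS /\ (W + <[x]> = V)%VS /\ (rho W < rho V)%N.
  apply: contrapT => nW; move: xC; rewrite memvE cyc_sup //; split => // W WV e.
  apply/eqP; rewrite eqn_leq rmono //= leqNgt; apply/negP => lt; apply: nW.
  by exists W.
have xW : x \notin W.
  apply/negP => xW; move: lt; rewrite -e (addv_idPl _) ?ltnn // -memvE //.
have eAW : (A + W = V)%VS.
  apply: (hyp_eq e); rewrite ?addvSr ?subv_add ?AV ?WV //.
  rewrite subvv andbT; apply/subvPn; by exists x.
have dWV : (\dim W != \dim V).
  rewrite ((dimv_leqif_eq WV).2); apply/negP => /eqP eWV; move: xW; rewrite eWV xV.
  by [].
have := dim_addline W x; rewrite e => dV.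
have := dimv_sum_cap A W; rewrite eAW => dS.
have := rsub A W; rewrite eAW => rS.
have := dimvS AV => dAV.
have dW' : (\dim W < \dim V)%N by rewrite ltn_neqAle dWV dimvS.
exists (A :&: W)%VS; split; first split.
- exact: subv_trans (capvSl _ _) AV.
- move: dW' dV dS rS dAV gA lt; lia.
- move: dW' dV dS dAV; lia.
Qed.

Lemma good_C V : forall n A, (\dim A <= n)%N -> good V A -> good V (cyc rho V).
Proof.
elim => [|n IH] A dA gA; case: (good_step gA) => [hAC|[A' [g' d']]];
  try exact: good_up gA hAC.
- lia.
- apply: (IH A') => //; lia.
Qed.

Lemma cyc_rank V : (rho (cyc rho V) + (\dim V - \dim (cyc rho V)) = rho V)%N.
Proof.
have gV : good V V by split; rewrite ?subvv ?subnn ?addn0.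
have [_ h] := good_C (leqnn _) gV.
have := L2 (cyc_sub V); lia.
Qed.

Lemma flat_ext Z M x : flat rho Z -> (M <= Z)%VS -> x \notin Z ->
  (rho M < rho (M + <[x]>))%N.
Proof.
move=> fZ MZ xZ; have := fZ x xZ.
have := rsub Z (M + <[x]>)%VS.
have -> : (Z + (M + <[x]>) = Z + <[x]>)%VS by rewrite addvA (addv_idPl MZ).
have : (rho M <= rho (Z :&: (M + <[x]>))%VS)%N by rewrite rmono // subv_cap MZ addvSl.
lia.
Qed.

Lemma cyc_flat_in V x : x \in V -> x \notin cyc rho V ->
  (rho (cyc rho V) < rho (cyc rho V + <[x]>))%N.
Proof.
move=> xV xC.
set C := cyc rho V.
have CV : (C <= V)%VS := cyc_sub V.
have CxV : (C + <[x]> <= V)%VS by rewrite subv_add CV -memvE.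
have := L2 CxV; have := cyc_rank V; rewrite -/C.
have := dimvS CxV.
have : (\dim C < \dim (C + <[x]>))%N.
  have := dimv_leqif_eq (addvSl C <[x]>); case=> a b.
  rewrite ltn_neqAle a andbT b; apply/negP => /eqP e; move: xC.
  by rewrite -/C e memvE addvSr.
lia.
Qed.

Lemma cyc_cyclic V : cyclic rho (cyc rho V).
Proof.
move=> x xC; split => // W WC e.
set C := cyc rho V in xC WC e *.
apply/eqP; rewrite eqn_leq rmono //= leqNgt; apply/negP => lt.
have CV : (C <= V)%VS := cyc_sub V.
set D := (V :\: C)%VS.
have eH : (W + D + <[x]> = V)%VS.
  rewrite -addvA (addvC D) addvA e /D addvC addv_diff; exact/addv_idPl.
have HV : (W + D <= V)%VS by rewrite -eH addvSl.
have := (cyc_in xC).2 (W + D)%VS HV eH.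
have := rsub W D; have := rle D; have := dimv_cap_compl V C.
rewrite (capv_idPr CV) -/D; have := cyc_rank V; rewrite -/C.
have := dimvS CV; lia.
Qed.

Lemma cyc_H1 Z J W y : cyclic rho Z -> y \in Z -> (Z <= J)%VS -> (W + <[y]> = J)%VS ->
  (rho J <= rho W)%N.
Proof.
move=> cZ yZ ZJ e.
have yl : (<[y]> <= Z)%VS by rewrite -memvE.
have e2 : ((Z :&: W) + <[y]> = Z)%VS.
  by rewrite addvC -modlaw // addvC e; apply/capv_idPl.
have := (cZ y yZ).2 _ (capvSl Z W) e2.
have := rsub Z W.
have : (rho J <= rho (Z + W)%VS)%N.
  by rewrite -e rmono // addvC addvS.
lia.
Qed.

Lemma main_sec Z1 Z2 : cyclic_flat rho Z1 -> cyclic_flat rho Z2 ->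
  let mt := cyc rho (Z1 :&: Z2)%VS in
  let jn := cl rho (Z1 + Z2)%VS in
  [/\ [/\ cyclic_flat rho mt, (mt <= Z1)%VS, (mt <= Z2)%VS
        & forall Z, cyclic_flat rho Z -> (Z <= Z1)%VS -> (Z <= Z2)%VS ->
            (Z <= mt)%VS],
      [/\ cyclic_flat rho jn, (Z1 <= jn)%VS, (Z2 <= jn)%VS
        & forall Z, cyclic_flat rho Z -> (Z1 <= Z)%VS -> (Z2 <= Z)%VS ->
            (jn <= Z)%VS],
      (rho mt + (\dim (Z1 :&: Z2)%VS - \dim mt) = rho (Z1 :&: Z2)%VS)%N,
      rho jn = rho (Z1 + Z2)%VS
    & (rho jn + rho mt + (\dim (Z1 :&: Z2)%VS - \dim mt) <= rho Z1 + rho Z2)%N].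
Proof.
move=> [f1 c1] [f2 c2] mt jn.
have mI : (mt <= Z1 :&: Z2)%VS := cyc_sub _.
have m1 : (mt <= Z1)%VS := subv_trans mI (capvSl _ _).
have m2 : (mt <= Z2)%VS := subv_trans mI (capvSr _ _).
have rk := cyc_rank (Z1 :&: Z2)%VS.
have rj : rho jn = rho (Z1 + Z2)%VS := rho_cl _.
split.
- split => //.
  + split; last exact: cyc_cyclic.
    move=> x xm; case: (boolP (x \in (Z1 :&: Z2)%VS)) => xI.
      exact: cyc_flat_in.
    move: xI; rewrite memv_cap negb_and => /orP [xn|xn].
      exact: flat_ext f1 m1 xn.
    exact: flat_ext f2 m2 xn.
  + move=> Z [fZ cZ] Z1' Z2'.
    have ZI : (Z <= Z1 :&: Z2)%VS by rewrite subv_cap Z1' Z2'.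
    apply/subvP => x xZ; rewrite memvE; apply: cyc_sup; split.
      by move/subvP: ZI; apply.
    move=> W WI e; apply/eqP; rewrite eqn_leq rmono //=.
    exact: cyc_H1 cZ xZ ZI e.
- split.
  + split; first exact: cl_flat.
    move=> x xj; split => // W WJ e; apply/eqP; rewrite eqn_leq rmono //=.
    case: (boolP (Z1 + Z2 <= W)%VS) => SW.
      by rewrite rj rmono.
    move: SW; rewrite subv_add negb_and => /orP [] /subvPn [y yZ yW].
    * have Z1J : (Z1 <= jn)%VS := subv_trans (addvSl Z1 Z2) (subv_cl _).
      have yJ : y \in jn by move/subvP: Z1J; apply.
      apply: (cyc_H1 c1 yZ Z1J); apply: (hyp_eq e); rewrite ?addvSl ?subv_add ?WJ -?memvE //.
      by rewrite subvv.
    * have Z2J : (Z2 <= jn)%VS := subv_trans (addvSr Z1 Z2) (subv_cl _).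
      have yJ : y \in jn by move/subvP: Z2J; apply.
      apply: (cyc_H1 c2 yZ Z2J); apply: (hyp_eq e); rewrite ?addvSl ?subv_add ?WJ -?memvE //.
      by rewrite subvv.
  + exact: subv_trans (addvSl Z1 Z2) (subv_cl _).
  + exact: subv_trans (addvSr Z1 Z2) (subv_cl _).
  + move=> Z [fZ _] h1 h2; apply: cl_min => //; by rewrite subv_add h1 h2.
- exact: rk.
- exact: rj.
- move: rk rj; rewrite /mt /jn => rk rj; have := rsub Z1 Z2; lia.
Qed.
End Q.

Theorem corollary4p2 (F : finFieldType) (vT : vectType F)
    (rho : {vspace vT} -> nat) (Hrho : qmatroid rho)
    (Z1 Z2 : {vspace vT})
    (HZ1 : cyclic_flat rho Z1) (HZ2 : cyclic_flat rho Z2) :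
  let mt := cyc rho (Z1 :&: Z2)%VS in
  let jn := cl rho (Z1 + Z2)%VS in
  [/\ (* meet: cyc(Z1 /\ Z2) is the greatest cyclic flat below Z1 and Z2 *)
      [/\ cyclic_flat rho mt, (mt <= Z1)%VS, (mt <= Z2)%VS
        & forall Z, cyclic_flat rho Z -> (Z <= Z1)%VS -> (Z <= Z2)%VS ->
            (Z <= mt)%VS],
      (* join: cl(Z1 + Z2) is the least cyclic flat above Z1 and Z2 *)
      [/\ cyclic_flat rho jn, (Z1 <= jn)%VS, (Z2 <= jn)%VS
        & forall Z, cyclic_flat rho Z -> (Z1 <= Z)%VS -> (Z2 <= Z)%VS ->
            (jn <= Z)%VS],
      (* rho(Z1 meet Z2) = rho(Z1 cap Z2) - dim((Z1 cap Z2)/(Z1 meet Z2)) *)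
      (rho mt + (\dim (Z1 :&: Z2)%VS - \dim mt) = rho (Z1 :&: Z2)%VS)%N,
      rho jn = rho (Z1 + Z2)%VS
    & (rho jn + rho mt + (\dim (Z1 :&: Z2)%VS - \dim mt) <= rho Z1 + rho Z2)%N].
Proof. exact: (main_sec Hrho HZ1 HZ2). Qed.
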